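(* Let $G$ be a group generated by $x_1,\dots,x_n$, with finite commutator subgroup $C=[G,G]$, such that $G/C$ is free abelian of rank $n$ with basis the images of $x_1,\dots,x_n$. Define $$X=\{g_{\mathbf m}\in T:\ c_{\,x_1^{m_1}x_2^{m_2}\cdots x_{k-1}^{m_{k-1}},\;x_k}=e\ \text{ for all } k=1,\dots,n\},\qquad P=X\cap \mathcal C_G(C),$$ where $\mathcal C_G(C)$ is the centralizer of $C$ in $G$. For $1\le i,j\le n$ let $V_{ij}$ be the least positive integer with $c_{x_i^{V_{ij}}x_j}=e$ and $v_i$ the least positive integer with $x_i^{v_i}\in\mathcal C_G(C)$ (these exist). Then: 1. For every generating set $\Lambda$ of $G$, the set of $\mathbf m\in\mathbb Z^n$ such that $l_{\mathbf r+\mathbf m,\lambda}=l_{\mathbf r,\lambda}$ for all $\mathbf r\in\mathbb Z^n$ and all $\lambda\in\Lambda$ is exactly $\{\mathbf m: g_{\mathbf m}\in P\}$; in particular it does not depend on $\Lambda$. 2. $P$ is a subgroup of $G$ isomorphic to $\mathbb Z^n$. 3. $P$ contains the non-trivial subgroup $P_{\mathrm{straight}}=\langle x_i^{m_i}: i=1,\dots,n\rangle$, where $m_i=\operatorname{lcm}\big(\{V_{ij}: n\ge j>i\}\cup\{v_i\}\big)$.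
   Context: Notation: $\bar g=g^{-1}$; the commutator is $c_{gh}=\bar g\,\bar h\,g\,h$; $c^{(g)}=\bar g\,c\,g$. For $\mathbf r\in\mathbb Z^n$ put $g_{\mathbf r}=x_1^{r_1}x_2^{r_2}\cdots x_n^{r_n}$ and $T=\{g_{\mathbf r}:\mathbf r\in\mathbb Z^n\}$ (Schreier transversal). Every $g\in G$ decomposes uniquely as $g=g_{\mathbf r}c$ with $c\in C$; write $\mathbf r_g=\mathbf r$ (the image of $g$ in $G/C\cong\mathbb Z^n$). For $\mathbf r\in\mathbb Z^n$ and $\lambda\in G$ the link is $l_{\mathbf r,\lambda}=\overline{g_{\mathbf r+\mathbf r_\lambda}}\,\lambda\,g_{\mathbf r}\in C$. *)

(* Defs.v *)
(* Possibly infinite groups: MathComp's [groupType]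
   (boot/monoid.v), i.e. a choiceType with a group law. *)
From HB Require Import structures.
From mathcomp Require Import all_boot.
From mathcomp Require Import ssralg ssrint.

Set Implicit Arguments.
Unset Strict Implicit.
Unset Printing Implicit Defensive.

Local Open Scope group_scope.

Section Defs.
Variable G : groupType.

Definition gexpz (g : G) (m : int) : G :=
  match m with
  | Posz k => g ^+ k
  | Negz k => (g ^+ k.+1)^-1
  end.

Definition comm (g h : G) : G := g^-1 * (h^-1 * (g * h)).

Definition is_subgroup (H : G -> Prop) : Prop :=
  [/\ H 1, (forall a b, H a -> H b -> H (a * b)) & (forall a, H a -> H a^-1)].

Definition gen (S : G -> Prop) : G -> Prop :=
  fun g => forall H : G -> Prop, is_subgroup H -> (forall s, S s -> H s) -> H g.

Definition generates (S : G -> Prop) : Prop := forall g, gen S g.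

Definition commutator_subgroup : G -> Prop :=
  gen (fun g => exists a b, g = comm a b).

Definition centralizer (S : G -> Prop) : G -> Prop :=
  fun g => forall c, S c -> g * c = c * g.

Definition finite_set (S : G -> Prop) : Prop :=
  exists s : seq G, forall g, S g <-> g \in s.

Variables (n : nat) (x : 'I_n -> G).

(* Z^n is represented by functions 'I_n -> int (index i : 'I_n stands for i+1) *)
Definition vadd (r m : 'I_n -> int) : 'I_n -> int := fun i => (r i + m i)%R.

Definition gr (r : 'I_n -> int) : G := \prod_(i < n) gexpz (x i) (r i).

(* x_1^{m_1} ... x_{k-1}^{m_{k-1}} for the index k (0-based: product over i < k) *)
Definition gprefix (m : 'I_n -> int) (k : 'I_n) : G :=
  \prod_(i < n | (i < k)%N) gexpz (x i) (m i).

(* r_g = r  iff  g = g_r c with c in C *)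
Definition is_rvec (g : G) (r : 'I_n -> int) : Prop :=
  commutator_subgroup ((gr r)^-1 * g).

Definition link (r : 'I_n -> int) (lam : G) (rlam : 'I_n -> int) : G :=
  (gr (vadd r rlam))^-1 * lam * gr r.

Definition Xset : G -> Prop :=
  fun g => exists m, g = gr m /\ forall k : 'I_n, comm (gprefix m k) (x k) = 1.

Definition Pset : G -> Prop :=
  fun g => Xset g /\ centralizer commutator_subgroup g.

Definition is_V (i j : 'I_n) (V : nat) : Prop :=
  (0 < V)%N /\ comm (x i ^+ V) (x j) = 1 /\
  forall k, (0 < k < V)%N -> comm (x i ^+ k) (x j) <> 1.

Definition is_v (i : 'I_n) (v : nat) : Prop :=
  (0 < v)%N /\ centralizer commutator_subgroup (x i ^+ v) /\
  forall k, (0 < k < v)%N -> ~ centralizer commutator_subgroup (x i ^+ k).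

Definition mstraight (V : 'I_n -> 'I_n -> nat) (v : 'I_n -> nat) (i : 'I_n) : nat :=
  lcmn (\big[lcmn/1%N]_(j < n | (i < j)%N) V i j) (v i).

Definition Pstraight (V : 'I_n -> 'I_n -> nat) (v : 'I_n -> nat) : G -> Prop :=
  gen (fun g => exists i, g = x i ^+ mstraight V v i).

End Defs.

(* Main.v *)
Require Import Defs.
From HB Require Import structures.
From mathcomp Require Import all_boot.
From mathcomp Require Import ssralg ssrnum ssrint intdiv ring.
From mathcomp Require Import zify.
From Stdlib Require Import FunctionalExtensionality ClassicalEpsilon Classical.

Set Implicit Arguments.
Unset Strict Implicit.
Unset Printing Implicit Defensive.

Local Open Scope group_scope.

Section Basics.
Variable G : groupType.
Implicit Types a b c g h : G.

Lemma gen_subgroup (S : G -> Prop) : is_subgroup (gen S).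
Proof.
split.
- by move=> H [] .
- by move=> a b Ha Hb H HH HS; case: (HH) => _ HM _; apply: HM; [apply: Ha|apply: Hb].
- by move=> a Ha H HH HS; case: (HH) => _ _ HV; apply: HV; apply: Ha.
Qed.

Lemma gen_in (S : G -> Prop) s : S s -> gen S s.
Proof. by move=> Ss H _ HS; apply: HS. Qed.

Notation C := (@commutator_subgroup G).

Lemma C1 : C 1. Proof. by case: (gen_subgroup (fun g => exists a b, g = comm a b)). Qed.
Lemma CM a b : C a -> C b -> C (a * b).
Proof. by case: (gen_subgroup (fun g => exists a b, g = comm a b)) => _ H _; apply: H. Qed.
Lemma CV a : C a -> C a^-1.
Proof. by case: (gen_subgroup (fun g => exists a b, g = comm a b)) => _ _ H; apply: H. Qed.
Lemma Ccomm a b : C (comm a b).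
Proof. by apply: gen_in; exists a, b. Qed.

Lemma commE a b : comm a b = [~ a, b]. Proof. by []. Qed.

Lemma Cconj c g : C c -> C (c ^ g).
Proof.
move=> Cc; apply: (Cc (fun c => C (c ^ g))).
- split; first by rewrite conj1g; apply: C1.
  + by move=> a b Ha Hb; rewrite conjMg; apply: CM.
  + by move=> a Ha; rewrite conjVg; apply: CV.
- by move=> s [a [b ->]]; rewrite commE conjRg -commE; apply: Ccomm.
Qed.

Definition eqC a b := C (a^-1 * b).

Lemma eqC_refl a : eqC a a. Proof. by rewrite /eqC mulVg; apply: C1. Qed.
Lemma eqC_sym a b : eqC a b -> eqC b a.
Proof. by rewrite /eqC => H; have := CV H; rewrite invgM invgK. Qed.
Lemma eqC_trans a b c : eqC a b -> eqC b c -> eqC a c.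
Proof. by rewrite /eqC => H1 H2; have := CM H1 H2; rewrite mulgA mulgK. Qed.
Lemma eqC_mull g a b : eqC a b -> eqC (g * a) (g * b).
Proof. by rewrite /eqC invgM -mulgA (mulgA g^-1) mulVg mul1g. Qed.
Lemma eqC_mulr g a b : eqC a b -> eqC (a * g) (b * g).
Proof. by rewrite /eqC invgM -mulgA => H; have := Cconj g H; rewrite conjgE !mulgA. Qed.
Lemma eqC_mul a b c d : eqC a b -> eqC c d -> eqC (a * c) (b * d).
Proof. by move=> H1 H2; apply: eqC_trans (eqC_mulr c H1) (eqC_mull b H2). Qed.
Lemma eqC_comm a b : eqC (a * b) (b * a).
Proof. by rewrite /eqC invgM -!mulgA; apply: (Ccomm b a). Qed.
Lemma eqC_cancl g a b : eqC (g * a) (g * b) -> eqC a b.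
Proof. by move/(eqC_mull g^-1); rewrite !mulKg. Qed.
Lemma eqC1 a : eqC a 1 -> C a.
Proof. by rewrite /eqC mulg1 => /CV; rewrite invgK. Qed.

Lemma eqC_prod (I : Type) (r : seq I) (P : pred I) (F H : I -> G) :
  eqC ((\prod_(i <- r | P i) F i) * \prod_(i <- r | P i) H i)
      (\prod_(i <- r | P i) (F i * H i)).
Proof.
elim: r => [|i r IH]; first by rewrite !big_nil mulg1; apply: eqC_refl.
rewrite !big_cons; case: (P i) => //.
set A := \prod_(j <- r | P j) F j; set B := \prod_(j <- r | P j) H j.
rewrite -!mulgA; apply: eqC_mull.
apply: eqC_trans (eqC_mull _ IH).
rewrite !mulgA; apply: eqC_mulr; apply: eqC_comm.
Qed.

Lemma gexpz0 g : gexpz g 0 = 1. Proof. by []. Qed.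
Lemma gexpz1 g : gexpz g 1 = g. Proof. by []. Qed.

Lemma gexpzS g (a : int) : gexpz g (a + 1)%R = gexpz g a * g.
Proof.
case: a => [k|k].
- have -> : (Posz k + 1)%R = Posz k.+1 by lia.
  by rewrite /= expgSr.
- case: k => [|k].
  + by rewrite /= mulVg.
  + have -> : (Negz k.+1 + 1)%R = Negz k by rewrite !NegzE; lia.
    by rewrite /= [g ^+ k.+2]expgS invgM mulgVK.
Qed.

Lemma gexpzP g (a : int) : gexpz g (a - 1)%R = gexpz g a * g^-1.
Proof. by rewrite -[in gexpz g a](GRing.subrK 1%R a) gexpzS mulgK. Qed.

Lemma gexpzD g (a b : int) : gexpz g (a + b)%R = gexpz g a * gexpz g b.
Proof.
elim/int_rec: b => [|k IH|k IH].
- by rewrite GRing.addr0 mulg1.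
- have -> : Posz k.+1 = (Posz k + 1)%R by lia.
  by rewrite GRing.addrA !gexpzS IH mulgA.
- have -> : (- Posz k.+1)%R = (- Posz k - 1)%R by lia.
  by rewrite GRing.addrA !gexpzP IH mulgA.
Qed.

Lemma commute_gexpz h g (a : int) : commute h g -> commute h (gexpz g a).
Proof. by move=> H; case: a => k /=; [apply: commuteX| apply: commuteV; apply: commuteX]. Qed.

End Basics.

Section Gr.
Variables (G : groupType) (n : nat) (x : 'I_n -> G).
Notation C := (@commutator_subgroup G).

Definition Fx (r : 'I_n -> int) (i : nat) : G :=
  oapp (fun j => gexpz (x j) (r j)) 1 (insub i).

Lemma FxE r (j : 'I_n) : Fx r j = gexpz (x j) (r j).
Proof. by rewrite /Fx valK. Qed.

Lemma Fx_eq r r' i : (forall j : 'I_n, val j = i -> r j = r' j) -> Fx r i = Fx r' i.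
Proof. by move=> H; rewrite /Fx; case: insubP => //= j _ eq; rewrite (H j eq). Qed.

Lemma grE r : gr x r = \prod_(0 <= i < n) Fx r i.
Proof. by rewrite big_mkord; apply: eq_bigr => j _; rewrite FxE. Qed.

Lemma gprefixE m (k : 'I_n) : gprefix x m k = \prod_(0 <= i < k) Fx m i.
Proof.
rewrite big_mkord (big_ord_widen_cond n predT (Fx m) (ltnW (ltn_ord k))) /gprefix.
by apply: eq_bigr => j _; rewrite FxE.
Qed.

Lemma prod_split (F : nat -> G) k m : (k < m)%N ->
  \prod_(0 <= i < m) F i = \prod_(0 <= i < k) F i * (F k * \prod_(k.+1 <= i < m) F i).
Proof. by move=> H; rewrite (big_cat_nat (leq0n k) (ltnW H)) (big_ltn H). Qed.

Lemma prod1 (F : nat -> G) a b : (forall i, (a <= i < b)%N -> F i = 1) ->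
  \prod_(a <= i < b) F i = 1.
Proof. by move=> H; apply: big1_seq => i /andP[_]; rewrite mem_index_iota; apply: H. Qed.

Lemma gr_hom a b : eqC (gr x a * gr x b) (gr x (vadd a b)).
Proof.
apply: eqC_trans (eqC_prod _ _ _ _) _.
by rewrite /gr /vadd; under [X in eqC _ X]eq_bigr do rewrite gexpzD; apply: eqC_refl.
Qed.

Definition dl (i : 'I_n) (t : int) : 'I_n -> int := fun j => if j == i then t else 0%R.

Lemma gr_dl i t : gr x (dl i t) = gexpz (x i) t.
Proof.
rewrite grE (prod_split _ (ltn_ord i)) FxE /dl eqxx.
rewrite prod1 ?mul1g; last first.
  move=> k /andP[_ Hk]; rewrite (@Fx_eq _ (fun _ => 0%R)) /Fx; first by case: insub.
  by move=> j Hj; rewrite /dl ifN //; apply/eqP => E; move: Hk; rewrite -Hj E ltnn.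
rewrite prod1 ?mulg1 //.
move=> k /andP[Hk _]; rewrite (@Fx_eq _ (fun _ => 0%R)) /Fx; first by case: insub.
by move=> j Hj; rewrite /dl ifN //; apply/eqP => E; move: Hk; rewrite -Hj E ltnn.
Qed.

Definition Xc m := forall k : 'I_n, comm (gprefix x m k) (x k) = 1.
Definition Mhom m := forall s, gr x (vadd s m) = gr x s * gr x m.

Lemma claimA m : Xc m -> Mhom m.
Proof.
move=> HX s.
suff H : forall t j, j + t = n -> gr x s * gr x m =
   \prod_(0 <= i < j) Fx s i * \prod_(0 <= i < j) Fx m i *
   \prod_(j <= i < n) Fx (vadd s m) i.
  rewrite (H n 0) // (big_geq (leqnn 0)) (big_geq (leqnn 0)) !mul1g -grE //.
elim=> [|t IH] j Hj.
  by rewrite addn0 in Hj; rewrite Hj (big_geq (leqnn n)) mulg1 -!grE.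
have jlt : (j < n)%N by lia.
rewrite (IH j.+1) ?addSnnS // !big_nat_recr //= (big_ltn jlt).
pose jo := Ordinal jlt.
have -> : Fx s j = gexpz (x jo) (s jo) by rewrite (FxE s jo).
have -> : Fx m j = gexpz (x jo) (m jo) by rewrite (FxE m jo).
have -> : Fx (vadd s m) j = gexpz (x jo) (vadd s m jo) by rewrite (FxE _ jo).
rewrite /vadd gexpzD.
have Hc : commute (\prod_(0 <= i < j) Fx m i) (gexpz (x jo) (s jo)).
  apply: commute_gexpz; have := HX jo; rewrite gprefixE /= commE => /eqP/commgP //.
rewrite -!mulgA; congr (_ * _).
by rewrite !mulgA Hc.
Qed.

Lemma claimB m : Mhom m -> Xc m.
Proof.
move=> HM k; have := HM (dl k 1).
rewrite gr_dl gexpz1 !grE !(prod_split _ (ltn_ord k)) !FxE /vadd /dl eqxx gexpzD gexpz1.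
rewrite (@eq_big_nat _ 1 *%g 0 k (Fx _) (Fx m)); last first.
  move=> i /andP[_ Hi]; apply: Fx_eq => j Hj.
  by rewrite ifN ?GRing.add0r //; apply/eqP => E; move: Hi; rewrite -Hj E ltnn.
rewrite (@eq_big_nat _ 1 *%g k.+1 n (Fx _) (Fx m)); last first.
  move=> i /andP[Hi _]; apply: Fx_eq => j Hj.
  by rewrite ifN ?GRing.add0r //; apply/eqP => E; move: Hi; rewrite -Hj E ltnn.
set P := \prod_(0 <= i < k) Fx m i; set R := \prod_(k.+1 <= i < n) Fx m i.
rewrite !mulgA => /mulIg /mulIg E.
rewrite gprefixE -/P commE; apply/eqP/commgP; exact: E.
Qed.

End Gr.

Section Main.
Variables (G : groupType) (n : nat) (x : 'I_n -> G).
Notation C := (@commutator_subgroup G).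
Notation gr := (gr x).
Hypothesis Hspan : forall g : G, exists r, is_rvec x g r.
Hypothesis Hfree : forall r : 'I_n -> int, C (gr r) -> forall i, r i = 0%R.

Definition vz : 'I_n -> int := fun _ => 0%R.
Definition vneg (a : 'I_n -> int) : 'I_n -> int := fun i => (- a i)%R.

Ltac vext := apply: functional_extensionality => i; rewrite /vadd /vz /vneg; lia.

Lemma vaddC (a b : 'I_n -> int) : vadd a b = vadd b a. Proof. vext. Qed.
Lemma vaddA (a b c : 'I_n -> int) : vadd (vadd a b) c = vadd a (vadd b c). Proof. vext. Qed.
Lemma vadd0 (a : 'I_n -> int) : vadd a vz = a. Proof. vext. Qed.
Lemma vadd0l (a : 'I_n -> int) : vadd vz a = a. Proof. vext. Qed.
Lemma vaddN (a : 'I_n -> int) : vadd a (vneg a) = vz. Proof. vext. Qed.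
Lemma vaddAC (a b c : 'I_n -> int) : vadd (vadd a b) c = vadd (vadd a c) b. Proof. vext. Qed.

Lemma gr0 : gr vz = 1.
Proof. by rewrite /Defs.gr big1 // => i _; rewrite /vz. Qed.

Lemma gr_inj (a b : 'I_n -> int) : eqC (gr a) (gr b) -> a = b.
Proof.
move=> H; pose d := fun i => (b i - a i)%R.
have Hd : vadd a d = b by apply: functional_extensionality => i; rewrite /vadd /d; lia.
have H1 : eqC (gr a * gr d) (gr a * 1).
  rewrite mulg1; apply: eqC_trans (gr_hom x a d) _; rewrite Hd; exact: eqC_sym.
have /eqC1 /Hfree Hz := eqC_cancl H1.
apply: functional_extensionality => i; have := Hz i; rewrite /d; lia.
Qed.

Lemma rvec_uniq g r1 r2 : is_rvec x g r1 -> is_rvec x g r2 -> r1 = r2.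
Proof. by move=> H1 H2; apply: gr_inj; apply: eqC_trans H1 (eqC_sym H2). Qed.

Lemma rvec_gr s : is_rvec x (gr s) s.
Proof. exact: eqC_refl. Qed.

Lemma rvecM g h a b : is_rvec x g a -> is_rvec x h b -> is_rvec x (g * h) (vadd a b).
Proof.
rewrite /is_rvec -!/(eqC _ _) => Ha Hb.
apply: eqC_trans (eqC_sym (gr_hom x a b)) _; exact: eqC_mul.
Qed.

Lemma rvecV g a : is_rvec x g a -> is_rvec x g^-1 (vneg a).
Proof.
rewrite /is_rvec -!/(eqC _ _) => Ha.
have H : eqC (g * gr (vneg a)) 1.
  rewrite -gr0 -(vaddN a); apply: eqC_trans (gr_hom x a (vneg a)).
  exact: eqC_mulr (eqC_sym Ha).
by have := eqC_mull g^-1 H; rewrite mulKg mulg1.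
Qed.

Lemma rvecC c : C c -> is_rvec x c vz.
Proof. by move=> Hc; rewrite /is_rvec gr0 invg1 mul1g. Qed.

Lemma link_in r l rho : is_rvec x l rho -> C (link x r l rho).
Proof.
rewrite /is_rvec -/(eqC _ _) => H; apply: eqC1; rewrite /link.
apply: (@eqC_trans _ _ ((gr (vadd r rho))^-1 * gr rho * gr r)).
  by apply: eqC_mulr; apply: eqC_mull; apply: eqC_sym.
rewrite -mulgA; apply: (@eqC_trans _ _ ((gr (vadd r rho))^-1 * gr (vadd rho r))).
  by apply: eqC_mull; apply: gr_hom.
by rewrite vaddC mulVg; apply: eqC_refl.
Qed.

Lemma Pset_gr m : Pset x (gr m) <-> Mhom x m /\ centralizer C (gr m).
Proof.
split.
- case=> [[m' [E HX]] Hc]; split => //.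
  have -> : m = m' by apply: gr_inj; rewrite E; apply: eqC_refl.
  exact: claimA.
- case=> HM Hc; split => //; exists m; split => //; exact: claimB.
Qed.

Lemma link_mul r a b ra rb :
  link x r (a * b) (vadd ra rb) = link x (vadd r rb) a ra * link x r b rb.
Proof.
rewrite /link.
have -> : vadd r (vadd ra rb) = vadd (vadd r rb) ra by vext.
by rewrite !mulgA mulgK.
Qed.

Lemma link_inv r a ra :
  link x r a^-1 (vneg ra) = (link x (vadd r (vneg ra)) a ra)^-1.
Proof.
rewrite /link.
have -> : vadd (vadd r (vneg ra)) ra = r by vext.
by rewrite !invgM invgK mulgA.
Qed.

Lemma part1 (Lam : G -> Prop) : generates Lam -> forall m,
  (forall r l rl, Lam l -> is_rvec x l rl -> link x (vadd r m) l rl = link x r l rl)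
  <-> Pset x (gr m).
Proof.
move=> Hg m; rewrite Pset_gr; split.
- move=> HL.
  pose S l := forall r rl, is_rvec x l rl -> link x (vadd r m) l rl = link x r l rl.
  have HS : forall l, S l.
    move=> l; apply: (Hg l S); last by move=> s Ls r rl; apply: HL.
    split.
    + move=> r rl H1; have <- := rvec_uniq (rvecC (@C1 G)) H1.
      by rewrite /link !vadd0 !mulg1 !mulVg.
    + move=> a b Sa Sb r rl Hab.
      have [ra Ha] := Hspan a; have [rb Hb] := Hspan b.
      have <- := rvec_uniq (rvecM Ha Hb) Hab.
      rewrite !link_mul vaddAC Sa // Sb //.
    + move=> a Sa r rl Hai.
      have [ra Ha] := Hspan a.
      have <- := rvec_uniq (rvecV Ha) Hai.
      by rewrite !link_inv vaddAC Sa.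
  split.
  + move=> s; have := HS (gr s) vz s (rvec_gr s).
    rewrite /link vadd0l gr0 mulg1 vadd0l mulVg vaddC => /eqP.
    by rewrite -mulgA mulg_eq1 eqg_inv => /eqP.
  + move=> c Hc; have := HS c vz vz (rvecC Hc).
    rewrite /link vadd0l !vadd0 gr0 invg1 mulg1 mul1g => E.
    by rewrite -{1}E !mulgA mulgV mul1g.
- case=> HM Hc r l rl _ Hl.
  rewrite /link vaddAC !HM.
  have Hin := link_in r Hl; rewrite /link in Hin.
  set L := (gr (vadd r rl))^-1 * l * gr r in Hin *.
  rewrite invgM.
  have -> : (gr m)^-1 / gr (vadd r rl) * l * (gr r * gr m) = (gr m)^-1 * L * gr m.
    by rewrite /L !mulgA.
  by rewrite -mulgA -(Hc L Hin) mulKg.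
Qed.

End Main.

Section Fin.
Variable G : groupType.

Lemma pigeon (s : seq G) (f : nat -> G) :
  (forall k, f k \in s) -> exists k1 k2, (k1 < k2)%N /\ f k1 = f k2.
Proof.
move=> Hf; set t := map f (iota 0 (size s).+1).
have : ~~ uniq t.
  apply/negP => U.
  have Hsub : {subset t <= s} by move=> y /mapP [k _ ->].
  by have := uniq_leq_size U Hsub; rewrite size_map size_iota ltnn.
case/(uniqPn 1) => i [j [ij jt E]].
exists i, j; split => //.
have it : (i < size t)%N by apply: ltn_trans jt.
have jt' : (j < (size s).+1)%N by rewrite /t size_map size_iota in jt.
have it' : (i < (size s).+1)%N by rewrite /t size_map size_iota in it.
move: E; rewrite !(nth_map 0%N) ?size_iota // !nth_iota //.
Qed.

Lemma conj_period (y c : G) (s : seq G) :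
  (forall k, c ^ (y ^+ k) \in s) -> exists d, (0 < d)%N /\ commute c (y ^+ d).
Proof.
move=> H; have [k1 [k2 [lt E]]] := pigeon H.
exists (k2 - k1)%N; split; first by rewrite subn_gt0.
have E2 : k2 = ((k2 - k1) + k1)%N by rewrite subnK // ltnW.
have : c ^ (y ^+ k1) = c ^ (y ^+ (k2 - k1) * y ^+ k1) by rewrite -expgnDr -E2.
rewrite conjgM => /conjg_inj E3.
by rewrite /commute conjgC -E3.
Qed.

End Fin.

Section Part0.
Variables (G : groupType) (n : nat) (x : 'I_n -> G).
Notation C := (@commutator_subgroup G).
Variable sC : seq G.
Hypothesis HC : forall g, C g <-> g \in sC.

Lemma centE g : centralizer C g <-> all (fun c => g * c == c * g) sC.
Proof.
split.
- by move=> H; apply/allP => c /HC Hc; apply/eqP; apply: H.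
- by move=> /allP H c /HC Hc; apply/eqP; apply: H.
Qed.

Lemma exV i j : exists V, is_V x i j V.
Proof.
have [d [d0 Hd]] : exists d, (0 < d)%N /\ commute (x j) (x i ^+ d).
  apply: (@conj_period _ _ _ (map ( *%g (x j)) sC)) => k.
  have -> : x j ^ (x i ^+ k) = x j * [~ x j, x i ^+ k] by rewrite commgEl mulVKg.
  by apply: map_f; apply/HC; apply: Ccomm.
pose P k := (0 < k)%N && (comm (x i ^+ k) (x j) == 1).
have exP : exists k, P k.
  by exists d; rewrite /P d0 /= commE; apply/commgP/commute_sym.
case: (ex_minnP exP) => V /andP [V0 /eqP HV] Hmin.
exists V; split => //; split => // k /andP [k0 kV] E.
have := Hmin k; rewrite /P k0 E eqxx /= => /(_ isT); rewrite leqNgt kV.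
done.
Qed.

Lemma exv i : exists v, is_v x i v.
Proof.
have H : forall l : seq G, {subset l <= sC} ->
   exists D, (0 < D)%N /\ forall c, c \in l -> commute c (x i ^+ D).
  elim=> [|c l IH] Hl; first by exists 1%N.
  have [D [D0 HD]] := IH (fun y Hy => Hl y (@mem_behead _ (c :: l) y Hy)).
  have [d [d0 Hd]] : exists d, (0 < d)%N /\ commute c (x i ^+ d).
    apply: (@conj_period _ _ _ sC) => k; apply/HC; apply: Cconj; apply/HC.
    by apply: Hl; rewrite inE eqxx.
  exists (d * D)%N; split; first by rewrite muln_gt0 d0.
  move=> c'; rewrite inE => /orP [/eqP ->|Hc'].
  - by rewrite expgnA; apply: commuteX.
  - by rewrite mulnC expgnA; apply: commuteX; apply: HD.
have [D [D0 HD]] := H sC (fun y Hy => Hy).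
pose P k := (0 < k)%N && all (fun c => x i ^+ k * c == c * x i ^+ k) sC.
have exP : exists k, P k.
  exists D; rewrite /P D0 /=; apply/centE => c /HC Hc.
  by apply: commute_sym; apply: HD.
case: (ex_minnP exP) => v /andP [v0 /centE Hv] Hmin.
exists v; split => //; split => // k /andP [k0 kv] /centE E.
have := Hmin k; rewrite /P k0 E /= => /(_ isT); rewrite leqNgt kv.
done.
Qed.

End Part0.

Section Part3.
Variables (G : groupType) (n : nat) (x : 'I_n -> G).
Notation C := (@commutator_subgroup G).

Lemma Fx_dl_ne i t j : j != val i -> Fx x (dl i t) j = 1.
Proof.
move=> H; rewrite (@Fx_eq _ _ _ _ (fun _ => 0%R)) /Fx; first by case: insub.
move=> k Hk; rewrite /dl ifN //; apply/eqP => E; move: H; by rewrite -Hk E eqxx.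
Qed.

Lemma cent_pow g q : centralizer C g -> centralizer C (g ^+ q).
Proof.
move=> H c Hc; apply: commute_sym; apply: commuteX; apply: commute_sym; exact: H.
Qed.

Lemma mstraight_gt0 (V : 'I_n -> 'I_n -> nat) v i : (forall j, 0 < V i j)%N -> (0 < v i)%N ->
  (0 < mstraight V v i)%N.
Proof.
move=> HV Hv; rewrite /mstraight lcmn_gt0 Hv andbT.
by elim/big_ind: _ => // a b Ha Hb; rewrite lcmn_gt0 Ha Hb.
Qed.

Lemma gen_Pset V v : (forall i j : 'I_n, is_V x i j (V i j)) ->
  (forall i : 'I_n, is_v x i (v i)) ->
  forall i, Pset x (x i ^+ mstraight V v i).
Proof.
move=> HV Hv i; set N := mstraight V v i.
have -> : x i ^+ N = gr x (dl i (Posz N)) by rewrite gr_dl.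
split; last first.
  rewrite gr_dl /=; have [_ [Hc _]] := Hv i.
  have /dvdnP [q ->] : (v i %| N)%N by apply: dvdn_lcmr.
  by rewrite mulnC expgnA; apply: cent_pow.
exists (dl i (Posz N)); split => // k.
rewrite gprefixE.
case: (ltnP i k) => Hik.
- rewrite (prod_split _ Hik) prod1; last first.
    by move=> j /andP [_ Hj]; apply: Fx_dl_ne; rewrite ltn_eqF.
  rewrite prod1; last first.
    by move=> j /andP [Hj _]; apply: Fx_dl_ne; rewrite gtn_eqF.
  rewrite mul1g mulg1 FxE /dl eqxx /=.
  have [_ [HVc _]] := HV i k.
  have /dvdnP [q ->] : (V i k %| N)%N.
    by apply: dvdn_trans (dvdn_lcml _ _); apply: (biglcmn_sup k).
  rewrite mulnC expgnA commE; apply/eqP/commgP; apply: commute_sym.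
  apply: commuteX; apply: commute_sym; apply/commgP; by rewrite -commE HVc.
- rewrite prod1 ?commE ?comm1g //.
  by move=> j /andP [_ Hj]; apply: Fx_dl_ne; rewrite ltn_eqF // (leq_trans Hj Hik).
Qed.

End Part3.

Section Lattice.
Import GRing.Theory Num.Theory.
Local Open Scope ring_scope.
Variable n : nat.
Notation vec := ('I_n -> int).
Variable M : vec -> Prop.
Hypothesis M0 : M (fun _ => 0).
Hypothesis MD : forall a b, M a -> M b -> M (vadd a b).
Hypothesis MN : forall a, M a -> M (fun i => - a i).
Hypothesis Mfull : forall i : 'I_n, exists N, (0 < N)%N /\ M (dl i (Posz N)).

Lemma Mscale (a : vec) (q : int) : M a -> M (fun j => q * a j).
Proof.
move=> Ha; elim/int_rec: q => [|k IH|k IH].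
- have -> : (fun j => 0 * a j) = (fun _ => 0) :> vec.
    by apply: functional_extensionality => j; rewrite mul0r.
  exact: M0.
- have -> : (fun j => (Posz k.+1) * a j) = vadd (fun j => Posz k * a j) a.
    by apply: functional_extensionality => j; rewrite /vadd -addn1 PoszD mulrDl mul1r.
  exact: MD.
- have -> : (fun j => - (Posz k.+1) * a j) = vadd (fun j => - Posz k * a j) (fun j => - a j).
    apply: functional_extensionality => j; rewrite /vadd -addn1 PoszD; ring.
  by apply: MD => //; apply: MN.
Qed.

Lemma Msum (s : seq 'I_n) (f : 'I_n -> vec) :
  (forall k, M (f k)) -> M (fun j => \sum_(k <- s) f k j).
Proof.
move=> Hf; elim: s => [|k s IH].
  have -> : (fun j => \sum_(k <- [::]) f k j) = (fun _ => 0) :> vec.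
    by apply: functional_extensionality => j; rewrite big_nil.
  exact: M0.
have -> : (fun j => \sum_(i <- k :: s) f i j) = vadd (f k) (fun j => \sum_(i <- s) f i j).
  by apply: functional_extensionality => j; rewrite big_cons.
exact: MD.
Qed.

Definition Mk (k : 'I_n) (m : vec) := M m /\ forall j : 'I_n, (k < j)%N -> m j = 0.

Lemma ex_min_classic (P : nat -> Prop) :
  (exists k, P k) -> exists m, P m /\ forall k, P k -> (m <= k)%N.
Proof.
move=> H.
pose Pb k := if excluded_middle_informative (P k) then true else false.
have exb : exists k, Pb k.
  by case: H => k Hk; exists k; rewrite /Pb; case: excluded_middle_informative.
case: (ex_minnP exb) => m Hm Hmin; exists m; split.
  by move: Hm; rewrite /Pb; case: excluded_middle_informative.
by move=> k Hk; apply: Hmin; rewrite /Pb; case: excluded_middle_informative.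
Qed.

Lemma exb (k : 'I_n) : exists b, Mk k b /\ 0 < b k /\ forall m, Mk k m -> (b k %| m k)%Z.
Proof.
pose P p := (0 < p)%N /\ exists m, Mk k m /\ m k = Posz p.
have [N [N0 HN]] := Mfull k.
have exP : exists p, P p.
  exists N; split => //; exists (dl k N); split; last by rewrite /dl eqxx.
  split => // j Hj; rewrite /dl ifN //; apply/eqP => E; move: Hj; by rewrite E ltnn.
have [p [[p0 [b [Hb Hbk]]] Hmin]] := ex_min_classic exP.
exists b; split => //; split; first by rewrite Hbk; lia.
move=> m [Mm Hm].
pose q := (m k %/ Posz p)%Z; pose m' := fun j => m j + (- q) * b j.
have Hm' : Mk k m'.
  split; first by apply: MD => //; apply: Mscale; case: Hb.
  by move=> j Hj; rewrite /m' Hm // (proj2 Hb j Hj) mulr0 addr0.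
have E : m' k = (m k %% Posz p)%Z.
  rewrite /m' Hbk /q; lia.
rewrite Hbk; apply/dvdz_mod0P.
case Er : (m k %% Posz p)%Z => [r|r]; last by lia.
case: r Er => // r Er.
have : P r.+1 by split => //; exists m'; split => //; rewrite E Er.
move/Hmin; lia.
Qed.

Lemma lattice : exists phi0 : vec -> vec,
  [/\ forall a b, phi0 (vadd a b) = vadd (phi0 a) (phi0 b),
      injective phi0 &
      forall m, M m <-> exists a, m = phi0 a].
Proof.
have Hb := fun k => constructive_indefinite_description _ (exb k).
pose bf k := proj1_sig (Hb k).
have Hbf : forall k, Mk k (bf k) /\ 0 < bf k k /\ forall m, Mk k m -> (bf k k %| m k)%Z.
  by move=> k; rewrite /bf; case: (Hb k).
pose phi0 (a : vec) : vec := fun j => \sum_(k < n) a k * bf k j.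
have phiD : forall a b, phi0 (vadd a b) = vadd (phi0 a) (phi0 b).
  move=> a b; apply: functional_extensionality => j; rewrite /phi0 /vadd -big_split /=.
  by apply: eq_bigr => k _; rewrite mulrDl.
have phi_dl : forall (k : 'I_n) (q : int), phi0 (dl k q) = fun j => q * bf k j.
  move=> k q; apply: functional_extensionality => j; rewrite /phi0 (bigD1 k) //= /dl eqxx.
  rewrite big1 ?addr0 // => i /negPf Hi; by rewrite Hi mul0r.
have phiM : forall a, M (phi0 a).
  move=> a; rewrite /phi0; apply: (@Msum (index_enum _) (fun k j => a k * bf k j)) => k.
  by apply: Mscale; case: (Hbf k) => [[]].
exists phi0; split => //.
- move=> a a' E.
  pose c := fun i => a i - a' i.
  have Hc : phi0 c = fun _ => 0.
    apply: functional_extensionality => j.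
    have : phi0 a j = phi0 (vadd c a') j by congr (phi0 _ j); apply: functional_extensionality => i; rewrite /vadd /c; ring.
    by rewrite phiD /vadd E; lia.
  apply: functional_extensionality => i; apply/eqP; rewrite -subr_eq0; apply/negPn/negP => Hi.
  case: (arg_maxnP (fun i : 'I_n => val i) (P := fun i => c i != 0) Hi) => k Hk Hmax.
  have : phi0 c k = c k * bf k k.
    rewrite /phi0 (bigD1 k) //= big1 ?addr0 // => j Hj.
    case: (ltngtP j k) => Hjk.
    + by rewrite (proj2 (proj1 (Hbf j)) k Hjk) mulr0.
    + have : ~~ (c j != 0).
        apply/negP => /Hmax; rewrite /geq /= leqNgt.
        by rewrite Hjk.
      by move/negPn/eqP ->; rewrite mul0r.
    + by move: Hj; rewrite (val_inj Hjk) eqxx.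
  rewrite Hc => /esym/eqP; rewrite mulf_eq0 (negPf Hk) /=.
  by have := proj1 (proj2 (Hbf k)); lia.
- move=> m; split; last by case=> a ->.
  suff H : forall t, (t <= n)%N -> forall m, M m ->
      (forall j : 'I_n, (t <= j)%N -> m j = 0) -> exists a, m = phi0 a.
    by move=> Mm; apply: (H n (leqnn n)) => // j; rewrite leqNgt ltn_ord.
  elim=> [|t IH] Ht m0 Mm0 Hm0.
    exists (fun _ => 0); apply: functional_extensionality => j.
    by rewrite Hm0 // /phi0 big1 // => k _; rewrite mul0r.
  have tn : (t < n)%N by [].
  pose ko := Ordinal tn.
  have Hko : Mk ko m0 by split => // j Hj; apply: Hm0.
  have Hdv := proj2 (proj2 (Hbf ko)) m0 Hko.
  pose q := (m0 ko %/ bf ko ko)%Z.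
  pose m' := vadd m0 (fun j => - (q * bf ko j)).
  have Mm' : M m'.
    apply: MD => //; apply: MN; apply: Mscale; by case: (Hbf ko) => [[]].
  have [a' Ha'] : exists a', m' = phi0 a'.
    apply: IH => //; first exact: ltnW.
    move=> j Hj; rewrite /m' /vadd.
    case: (ltngtP t j) => Htj.
    + by rewrite Hm0 // (proj2 (proj1 (Hbf ko)) j Htj) mulr0 oppr0 addr0.
    + by move: Hj; rewrite leqNgt Htj.
    + have -> : j = ko by apply: val_inj.
      by rewrite /q divzK // subrr.
  exists (vadd a' (dl ko q)).
  rewrite phiD -Ha' phi_dl /m'; apply: functional_extensionality => j.
  rewrite /vadd; ring.
Qed.

End Lattice.

Section Sub.
Variables (G : groupType) (n : nat) (x : 'I_n -> G).
Notation C := (@commutator_subgroup G).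
Notation gr := (gr x).
Hypothesis Hspan : forall g : G, exists r, is_rvec x g r.
Hypothesis Hfree : forall r : 'I_n -> int, C (gr r) -> forall i, r i = 0%R.

Lemma grN m : Mhom x m -> gr (vneg m) = (gr m)^-1.
Proof.
move=> HM; have := HM (vneg m); rewrite vaddC vaddN gr0 => /esym.
by move/(congr1 (fun y => y * (gr m)^-1)); rewrite mulgK mul1g.
Qed.

Lemma P_subgroup : is_subgroup (Pset x).
Proof.
split.
- rewrite -(gr0 x); apply/(Pset_gr Hfree); split.
  + by move=> s; rewrite vadd0 gr0 mulg1.
  + by move=> c _; rewrite gr0 mul1g mulg1.
- move=> _ _ [[ma [-> HXa]] Hca] [[mb [-> HXb]] Hcb].
  have HMa := claimA HXa; have HMb := claimA HXb.
  rewrite -HMb; apply/(Pset_gr Hfree); split.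
  + move=> s; rewrite -vaddA HMb HMa HMb.
    by rewrite [RHS]mulgA.
  + move=> c Hc; rewrite HMb; apply: commute_sym; apply: commuteM;
      apply: commute_sym; [exact: Hca|exact: Hcb].
- move=> _ [[m [-> HX]] Hc].
  have HM := claimA HX; rewrite -(grN HM); apply/(Pset_gr Hfree); split.
  + move=> s; rewrite (grN HM); move: (HM (vadd s (vneg m))).
    by rewrite vaddA (vaddC (vneg m)) vaddN vadd0 => ->; rewrite mulgK.
  + move=> c Hc'; rewrite (grN HM); apply: commute_sym; apply: commuteV.
    by apply: commute_sym; apply: Hc.
Qed.

End Sub.

Theorem theorem3 (G : groupType) (n : nat) (x : 'I_n -> G)
  (n_pos : (0 < n)%N)
  (Hgen : generates (fun g => exists i, g = x i))
  (Hfin : finite_set (@commutator_subgroup G))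
  (Hspan : forall g : G, exists r, is_rvec x g r)
  (Hfree : forall r : 'I_n -> int,
      commutator_subgroup (gr x r) -> forall i, r i = 0%R) :
  (* the numbers V_ij and v_i exist *)
  ((forall i j : 'I_n, exists V, is_V x i j V) /\
   (forall i : 'I_n, exists v, is_v x i v)) /\
  (* 1. *)
  (forall Lambda : G -> Prop, generates Lambda ->
     forall m : 'I_n -> int,
       (forall (r : 'I_n -> int) (lam : G) (rlam : 'I_n -> int),
           Lambda lam -> is_rvec x lam rlam ->
           link x (vadd r m) lam rlam = link x r lam rlam)
       <-> Pset x (gr x m)) /\
  (* 2. *)
  (is_subgroup (Pset x) /\
   exists phi : ('I_n -> int) -> G,
     [/\ forall a b, phi (vadd a b) = phi a * phi b,
         injective phi &
         forall g, Pset x g <-> exists a, g = phi a]) /\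
  (* 3. *)
  (forall (V : 'I_n -> 'I_n -> nat) (v : 'I_n -> nat),
     (forall i j : 'I_n, is_V x i j (V i j)) ->
     (forall i : 'I_n, is_v x i (v i)) ->
     (forall g, Pstraight x V v g -> Pset x g) /\
     (exists g, Pstraight x V v g /\ g <> 1)).
Proof.
have [sC HsC] := Hfin.
have P0V := exV x HsC; have P0v := exv x HsC.
have Psub := P_subgroup Hfree.
have HPgr := Pset_gr Hfree.
split; first by split.
split; first by move=> L HL m; apply: part1.
split; last first.
  move=> V v HV Hv; split.
  - move=> g Hg; apply: (Hg (Pset x) Psub); move=> s [i ->]; exact: gen_Pset.
  - pose i0 := Ordinal n_pos; pose N := mstraight V v i0.
    have N0 : (0 < N)%N.
      apply: mstraight_gt0; first by move=> j; case: (HV i0 j).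
      by case: (Hv i0).
    exists (x i0 ^+ N); split; first by apply: gen_in; exists i0.
    move=> E.
    have := Hfree (dl i0 (Posz N)); rewrite gr_dl /= E => /(_ (@C1 G) i0).
    by rewrite /dl eqxx; case: (N) N0.
split; first exact: Psub.
pose Vf i j := proj1_sig (constructive_indefinite_description _ (P0V i j)).
pose vf i := proj1_sig (constructive_indefinite_description _ (P0v i)).
have HVf : forall i j, is_V x i j (Vf i j).
  by move=> i j; rewrite /Vf; case: constructive_indefinite_description.
have Hvf : forall i, is_v x i (vf i).
  by move=> i; rewrite /vf; case: constructive_indefinite_description.
pose M m := Pset x (gr x m).
have Mhom_of : forall m, M m -> Mhom x m by move=> m /HPgr [].
have [phi0 [phiD phiI phiM]] : exists phi0 : ('I_n -> int) -> ('I_n -> int),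
  [/\ forall a b, phi0 (vadd a b) = vadd (phi0 a) (phi0 b),
      injective phi0 &
      forall m, M m <-> exists a, m = phi0 a].
  apply: lattice.
  - by rewrite /M (_ : gr x _ = 1) ?(gr0 x) //; case: Psub.
  - move=> a b Ma Mb; rewrite /M (Mhom_of b Mb a); case: Psub => _ H _; exact: H.
  - move=> a Ma; rewrite /M (_ : gr x _ = (gr x a)^-1) ?(grN (Mhom_of a Ma)) //.
    by case: Psub => _ _ H; apply: H.
  - move=> i; exists (mstraight Vf vf i); split.
      apply: mstraight_gt0; first by move=> j; case: (HVf i j).
      by case: (Hvf i).
    by rewrite /M gr_dl; apply: gen_Pset.
have Mphi : forall a, M (phi0 a) by move=> a; apply/phiM; exists a.
exists (fun a => gr x (phi0 a)); split.
- by move=> a b; rewrite phiD (Mhom_of _ (Mphi b)).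
- move=> a b E; apply: phiI; apply: (gr_inj Hfree); rewrite E; exact: eqC_refl.
- move=> g; split; last by case=> a ->; apply: Mphi.
  move=> Hg; case: (Hg) => [[m [Em _]] _].
  have : M m by rewrite /M -Em.
  by move/phiM => [a Ea]; exists a; rewrite Em Ea.
Qed.
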